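(* Let $n\ge 2$ and let $F$ be an exponential functor with $\deg F(t)>0$. Consider $R_{F,\mathbb{Q}}$ with the $W=S_n$-action by signed permutations of variables, denoted $R_{F,\mathbb{Q}}^{\mathrm{sgn}}$, and the ideal $I_{F,\mathbb{Q}}=(F(t_2)-F(t_1),\dots,F(t_n)-F(t_{n-1}))$ with this action, denoted $I_{F,\mathbb{Q}}^{\mathrm{sgn}}$. Then the $R_{F,\mathbb{Q}}^W$-submodule $(I_{F,\mathbb{Q}}^{\mathrm{sgn}})^W$ of $(R_{F,\mathbb{Q}}^{\mathrm{sgn}})^W$ is generated by the $n-1$ antisymmetric polynomials $q_0,\dots,q_{n-2}$, where \[ q_i(t_1,\dots,t_n)=\det\begin{pmatrix} F(t_1)t_1^i & \cdots & F(t_n)t_n^i\\ t_1^{n-2}&\cdots&t_n^{n-2}\\ \vdots&\ddots&\vdots\\ t_1&\cdots&t_n\\ 1&\cdots&1\end{pmatrix}. \]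
   Context: $F$ is an exponential functor: a continuous symmetric monoidal functor from finite-dimensional complex inner product spaces (unitaries, $\oplus$) to finite-dimensional complex inner product super-vector spaces (grading-preserving unitaries, graded $\otimes$), preserving duals, with $F(\mathbb{C})$ having only positive $S^1$-characters; $F(t)\in\mathbb{Z}[t]$ is its graded (even minus odd) character polynomial. $R_{F,\mathbb{Q}}=\big(\mathbb{Q}[t_1,\dots,t_n]/(t_1\cdots t_n-1)\big)[F(t_1)^{-1},\dots,F(t_n)^{-1}]$; $R_{F,\mathbb{Q}}^W$ denotes invariants for the ordinary permutation action. The signed action is $\sigma\cdot f=\mathrm{sign}(\sigma)\,(f\circ\sigma)$ (permuting variables); $(\cdot)^W$ denotes fixed points. *)

(* Defs.v *)
From HB Require Import structures.
From mathcomp Require Import all_boot all_order all_algebra all_fingroup.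
From mathcomp Require Import mpoly.
Unset Printing Implicit Defensive.
Import GRing.Theory.
Local Open Scope ring_scope.

(* The ring R_{F,Q} = (Q[t_1..t_n]/(t_1...t_n - 1))[F(t_1)^-1,...,F(t_n)^-1]
   is modelled by representatives: a pair (a, k) with a in Q[t_1..t_n]
   stands for the class of a / D^k, where D = F(t_1)...F(t_n). *)

Section RF.
Variables (n : nat) (f : {poly int}).

Definition P := {mpoly rat[n]}.

Definition Ft (i : 'I_n) : P :=
  \sum_(j < size f) ((f`_j)%:~R : rat) *: ('X_i ^+ j).

Definition Dprod : P := \prod_(i < n) Ft i.

Definition inJ (a : P) : Prop :=
  exists g : P, a = g * (\prod_(i < n) 'X_i - 1).

Definition R_eq (a : P) (k : nat) (b : P) (m : nat) : Prop :=
  exists r : nat, inJ (Dprod ^+ r * (a * Dprod ^+ m - b * Dprod ^+ k)).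

Definition sgnp (s : 'S_n) : rat := (-1) ^+ odd_perm s.

(* a / D^k is fixed by the ordinary permutation action (D is symmetric) *)
Definition R_sym (a : P) (k : nat) : Prop :=
  forall s : 'S_n, R_eq (msym s a) k a k.

Definition R_sgn_inv (a : P) (k : nat) : Prop :=
  forall s : 'S_n, R_eq (sgnp s *: msym s a) k a k.

Definition R_inI (a : P) (k : nat) : Prop :=
  exists (c : 'I_n -> 'I_n -> P) (l : nat),
    R_eq a k (\sum_(i < n) \sum_(j < n | j == i.+1 :> nat) c i j * (Ft j - Ft i)) l.

Definition qmat (i : nat) : 'M[P]_n :=
  \matrix_(r < n, j < n)
     (if r == 0%N :> nat then Ft j * 'X_j ^+ i else 'X_j ^+ (n.-1 - r)).

Definition q (i : nat) : P := \det (qmat i).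

End RF.

(* Main.v *)
Require Import Defs.
From HB Require Import structures.
From mathcomp Require Import all_boot all_order all_algebra all_fingroup.
From mathcomp Require Import mpoly.
From mathcomp Require Import zify.
From mathcomp Require Import ring.
Local Open Scope ring_scope.
Import GRing.Theory Num.Theory.

Lemma cofactor_indep (R : comRingType) m (A B : 'M[R]_m) i j :
  (forall r c, r != i -> A r c = B r c) -> cofactor A i j = cofactor B i j.
Proof.
move=> H; rewrite /cofactor; congr (_ * \det _); apply/matrixP=> r c.
by rewrite !mxE H // eq_sym neq_lift.
Qed.

Lemma key_alg (R0 : comRingType) (d a aa ag nc inv : R0) (R k r2 l : nat) :
  nc * inv = 1 ->
  nc * (d ^+ (R + k + r2) * (a * d ^+ l - inv * ag * d ^+ k)) =
  d ^+ (r2 + l) * (- (d ^+ R * ((aa - nc * a) * d ^+ k))) +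
  d ^+ (R + k) * (d ^+ r2 * (aa * d ^+ l - ag * d ^+ k)).
Proof.
move=> H.
have -> : nc * (d ^+ (R + k + r2) * (a * d ^+ l - inv * ag * d ^+ k)) =
  d ^+ (R + k + r2) * (nc * a * d ^+ l - (nc * inv) * ag * d ^+ k) by ring.
rewrite H !exprD; ring.
Qed.

Section Core.
Variables (n' : nat) (f : {poly int}).
Local Notation n := n'.+1.
Local Notation PP := (P n).

Definition VV : 'M[PP]_n := \matrix_(r, k) 'X_k ^+ (n.-1 - r).
Definition Del : PP := \det VV.

Lemma X_neq (i j : 'I_n) : i != j -> ('X_i : PP) != 'X_j.
Proof.
move=> ij; apply/negP=> /eqP /(congr1 (fun p : PP => p@_U_(i))).
by rewrite !mcoeffXU eqxx eq_sym (negbTE ij) => /eqP; rewrite oner_eq0.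
Qed.

Lemma Del_neq0 : Del != 0.
Proof.
pose s : 'S_n := perm (@rev_ord_inj n).
rewrite /Del; have -> : VV = row_perm s (Vandermonde n (\row_k ('X_k : PP))).
  apply/matrixP=> r k; rewrite !mxE permE /=; congr (_ ^+ _).
rewrite row_permE det_mulmx det_perm det_Vandermonde.
rewrite mulf_neq0 ?signr_eq0 //; apply/prodf_neq0 => i _; apply/prodf_neq0 => j ij.
by rewrite !mxE subr_eq0 X_neq // eq_sym neq_ltn ij.
Qed.

Definition pi : {poly PP} := \prod_(l < n) ('X - ('X_l)%:P).
Definition cc (i : 'I_n) : PP := - pi`_(n.-1 - i).
Definition CC : 'M[PP]_n :=
  \matrix_(r, i) (if r == 0 :> nat then cc i else (i.+1 == r :> nat)%:R).
Definition TT : 'M[PP]_n := diag_mx (\row_k 'X_k).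

Lemma size_pi : size pi = n.+1.
Proof.
rewrite /pi -(big_map (fun l : 'I_n => 'X_l) xpredT (fun x => 'X - x%:P)).
by rewrite size_prod_XsubC size_map [index_enum _]unlock -enumT size_enum_ord.
Qed.

Lemma pi_root (k : 'I_n) : pi.['X_k] = 0.
Proof.
rewrite /pi horner_prod; apply/eqP; rewrite prodf_seq_eq0; apply/hasP.
by exists k; rewrite ?mem_index_enum //= !hornerE subrr.
Qed.

Lemma pi_lead : pi`_n = 1.
Proof.
have : pi \is monic by apply: monic_prod => i _; apply: monicXsubC.
by move/monicP; rewrite lead_coefE size_pi.
Qed.

Lemma Xn_expand (k : 'I_n) :
  ('X_k : PP) ^+ n = \sum_(i < n) cc i * 'X_k ^+ (n.-1 - i).
Proof.
have := pi_root k; rewrite horner_coef size_pi big_ord_recr /= pi_lead mul1r.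
move/eqP; rewrite addrC addr_eq0 => /eqP ->.
rewrite -sumrN (reindex_inj rev_ord_inj) /=; apply: eq_bigr => i _.
rewrite /cc mulNr; congr (- (_ * _)); rewrite ?subSS //.
Qed.

Lemma VT_CV : VV *m TT = CC *m VV.
Proof.
apply/matrixP=> r k; rewrite mul_mx_diag !mxE.
case: (altP (r =P 0 :> nat)) => [r0|rn0]; last first.
  case: r rn0 => [[|r] //] Hr _ /=.
  rewrite (bigD1 (Ordinal (ltnW Hr))) //= !mxE /= eqxx mul1r big1 ?addr0.
    by rewrite -exprSr subnSK.
  move=> i /= ne; rewrite !mxE /=; case: eqP => [[e]|]; last by rewrite mul0r.
  by move: ne; rewrite -val_eqE /= e eqxx.
rewrite r0 subn0 -exprSr.
rewrite Xn_expand; apply: eq_bigr => i _; rewrite !mxE r0 /=.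
by [].
Qed.

Lemma scale_cancel m p (A B : 'M[PP]_(m, p)) : Del *: A = Del *: B -> A = B.
Proof.
move=> /matrixP E; apply/matrixP=> i j; move: (E i j); rewrite !mxE.
exact: (mulfI Del_neq0).
Qed.

Lemma TadjV : TT *m \adj VV = \adj VV *m CC.
Proof.
apply: scale_cancel.
have h1 : \adj VV *m (VV *m TT) *m \adj VV = Del *: (TT *m \adj VV).
  by rewrite !mulmxA mul_adj_mx mul_scalar_mx -scalemxAl.
have h2 : \adj VV *m (CC *m VV) *m \adj VV = Del *: (\adj VV *m CC).
  by rewrite !mulmxA -(mulmxA _ VV) mul_mx_adj mul_mx_scalar.
by rewrite -h1 -h2 VT_CV.
Qed.

Definition rowW (w : 'I_n -> PP) (a : nat) : 'rV[PP]_n := \row_k (w k * 'X_k ^+ a).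

Definition Epow (a : nat) : 'M[PP]_n := iter a (fun M => M *m CC) 1%:M.

Lemma rowW_S w a : rowW w a.+1 = rowW w a *m TT.
Proof. by apply/matrixP=> i k; rewrite mul_mx_diag !mxE exprSr mulrA. Qed.

Lemma psiW w a : rowW w a *m \adj VV = rowW w 0 *m \adj VV *m Epow a.
Proof.
elim: a => [|a IH]; first by rewrite mulmx1.
by rewrite rowW_S -mulmxA TadjV mulmxA IH -!mulmxA.
Qed.

Lemma psi_rec w a : rowW w a.+1 *m \adj VV = rowW w a *m \adj VV *m CC.
Proof. by rewrite rowW_S -mulmxA TadjV mulmxA. Qed.

Lemma rowW1 : rowW (fun _ => 1) 0 *m \adj VV = Del *: delta_mx 0 ord_max.
Proof.
have -> : rowW (fun _ => 1) 0 = row ord_max VV.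
  by apply/matrixP=> i k; rewrite !mxE /= subnn mul1r.
rewrite -row_mul mul_mx_adj; apply/matrixP=> i k; rewrite !mxE /=.
by rewrite ord1 eqxx /= mulr_natr eq_sym.
Qed.

Definition Bm (mu : 'I_n -> nat) (j : 'I_n) (w : 'I_n -> PP) : 'M[PP]_n :=
  \matrix_(r, k) ('X_k ^+ mu r * (if r == j then w k else 1)).

Lemma det_adjV : \det (\adj VV) = Del ^+ n'.
Proof.
have := congr1 determinant (mul_mx_adj VV); rewrite det_mulmx det_scalar exprS.
exact: (mulfI Del_neq0).
Qed.

Definition Kmat (mu : 'I_n -> nat) (j : 'I_n) (w : 'I_n -> PP) : 'M[PP]_n := \matrix_(r, k)
  (if r == j then (rowW w 0 *m \adj VV *m Epow (mu j)) 0 k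
   else ((delta_mx 0 (@ord_max n') : 'rV[PP]_n) *m Epow (mu r)) 0 k).

Lemma Kmat_E (mu : 'I_n -> nat) (j r c : 'I_n) w : Kmat mu j w r c =
  if r == j then (rowW w 0 *m \adj VV *m Epow (mu j)) 0 c
   else ((delta_mx 0 (@ord_max n') : 'rV[PP]_n) *m Epow (mu r)) 0 c.
Proof. by rewrite mxE. Qed.

Lemma Kmat_off (mu : 'I_n -> nat) (j r c : 'I_n) w : r != j -> Kmat mu j w r c =
   ((delta_mx 0 (@ord_max n') : 'rV[PP]_n) *m Epow (mu r)) 0 c.
Proof. by move=> /negbTE rj; rewrite mxE rj. Qed.

Lemma Kmat_cof mu j w k : cofactor (Kmat mu j w) j k = cofactor (Kmat mu j (fun _ => 0)) j k.
Proof.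
apply: (@cofactor_indep _ n (Kmat mu j w) (Kmat mu j (fun _ => 0)) j k) => r c rj.
exact: (etrans (Kmat_off mu j r c w rj) (esym (Kmat_off mu j r c (fun _ => 0) rj))).
Qed.

Lemma detB_lin mu j : exists v : 'cV[PP]_n,
  forall w, \det (Bm mu j w) = (rowW w 0 *m \adj VV *m v) 0 0.
Proof.
pose d : 'rV[PP]_n := \row_r (if r == j then 1 else Del).
have c1 w : Bm mu j w *m \adj VV = diag_mx d *m Kmat mu j w.
  apply/matrixP=> r k; rewrite mul_diag_mx.
  have -> : (Bm mu j w *m \adj VV) r k =
     (rowW (if r == j then w else fun _ => 1) (mu r) *m \adj VV) 0 k.
    rewrite !mxE; apply: eq_bigr => l _; rewrite !mxE.
    by case: (r == j); rewrite (mulrC ('X_l ^+ _)).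
  rewrite psiW mxE Kmat_E [(\row_r _) 0 r]mxE.
  case: eqP => [->|_]; first by rewrite mul1r.
  by rewrite rowW1 -scalemxAl [in LHS]mxE.
have dd : \prod_r d 0 r = Del ^+ n'.
  rewrite (bigD1 j) //= !mxE eqxx mul1r.
  rewrite (eq_bigr (fun _ => Del)); last by move=> r /negbTE rj; rewrite mxE rj.
  by rewrite prodr_const cardC1 card_ord.
have c2 w : \det (Bm mu j w) = \det (Kmat mu j w).
  have := congr1 determinant (c1 w); rewrite !det_mulmx det_adjV det_diag dd mulrC.
  by apply: mulfI; rewrite expf_neq0 // Del_neq0.
exists (Epow (mu j) *m \col_k cofactor (Kmat mu j (fun _ => 0)) j k) => w.
rewrite c2 (expand_det_row _ j) mulmxA mxE; apply: eq_bigr => k _.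
have e1 : Kmat mu j w j k = (rowW w 0 *m \adj VV *m Epow (mu j)) 0 k.
  by rewrite mxE eqxx.
have e3 : (\col_k0 cofactor (Kmat mu j (fun _ => 0)) j k0) k 0 =
          cofactor (Kmat mu j (fun _ => 0)) j k by rewrite mxE.
exact: (congr2 (fun a b => a * b) e1 (etrans (Kmat_cof mu j w k) (esym e3))).
Qed.

Local Notation F := (Ft n f).

Definition inQ (p : PP) := exists h : 'I_n' -> PP, p = \sum_(i < n') h i * q n f i.

Lemma inQ0 : inQ 0.
Proof. by exists (fun _ => 0); rewrite big1 // => i _; rewrite mul0r. Qed.

Lemma inQD p1 p2 : inQ p1 -> inQ p2 -> inQ (p1 + p2).
Proof.
move=> [h1 ->] [h2 ->]; exists (fun i => h1 i + h2 i).
by rewrite -big_split; apply: eq_bigr => i _; rewrite mulrDl.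
Qed.

Lemma inQM x p : inQ p -> inQ (x * p).
Proof.
move=> [h ->]; exists (fun i => x * h i).
by rewrite mulr_sumr; apply: eq_bigr => i _; rewrite mulrA.
Qed.

Lemma inQN p : inQ p -> inQ (- p).
Proof. by move=> h; rewrite -mulN1r; apply: inQM. Qed.

Lemma inQB p1 p2 : inQ p1 -> inQ p2 -> inQ (p1 - p2).
Proof. by move=> h1 h2; apply: inQD => //; apply: inQN. Qed.

Lemma inQ_sum (I : finType) (Pr : pred I) (g : I -> PP) :
  (forall i, Pr i -> inQ (g i)) -> inQ (\sum_(i | Pr i) g i).
Proof.
move=> H; apply: (big_ind inQ) => //; [exact: inQ0 | exact: inQD].
Qed.

Lemma inQq (a : nat) : (a < n')%N -> inQ (q n f a).
Proof.
move=> lt; exists (fun i : 'I_n' => ((i : nat) == a)%:R).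
rewrite (bigD1 (Ordinal lt)) //= eqxx mul1r big1 ?addr0 // => i /negbTE ne.
by rewrite -val_eqE /= in ne; rewrite ne mul0r.
Qed.

Lemma neq0_nat (r : 'I_n) : r != ord0 -> (r == 0 :> nat) = false.
Proof. by rewrite -val_eqE => /negbTE. Qed.

Definition ps a (m : 'I_n) := (rowW F a *m \adj VV) 0 m.

Lemma qmat_cof a k : cofactor (qmat n f a) ord0 k = cofactor VV ord0 k.
Proof.
apply: cofactor_indep => r c r0; rewrite !mxE.
by rewrite (neq0_nat _ r0).
Qed.

Lemma ps0 a : ps a ord0 = q n f a.
Proof.
rewrite /ps /q mxE (expand_det_row _ ord0); apply: eq_bigr => k _.
have e1 : rowW F a 0 k = qmat n f a ord0 k by rewrite !mxE.
have e2 : \adj VV k ord0 = cofactor (qmat n f a) ord0 k by rewrite mxE qmat_cof.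
exact: (congr2 (fun x y => x * y) e1 e2).
Qed.

Lemma ps_rec a (m m1 : 'I_n) : m1 = m.+1 :> nat -> ps a.+1 m = ps a m1 + ps a ord0 * cc m.
Proof.
move=> em; rewrite /ps psi_rec [LHS]mxE (bigD1 ord0) //= (bigD1 m1) /=; last first.
  by rewrite -val_eqE /= em.
have c0 : CC ord0 m = cc m by rewrite mxE.
have c1 : CC m1 m = 1 by rewrite mxE em /= eqxx.
rewrite c0 c1 mulr1 big1 ?addr0 1?addrC // => r /andP [r0 rm].
rewrite [CC r m]mxE (neq0_nat _ r0).
have -> : (m.+1 == r :> nat) = false.
  by apply/negbTE; move: rm; rewrite -val_eqE /= -em eq_sym.
by rewrite mulr0.
Qed.

Lemma psQ m : forall a, (a + m < n')%N -> forall mo : 'I_n, mo = m :> nat -> inQ (ps a mo).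
Proof.
elim: m => [|m IH] a lt mo em.
  have -> : mo = ord0 by apply: val_inj.
  by rewrite ps0; apply: inQq; rewrite addn0 in lt.
have lm : (m < n)%N by lia.
have := ps_rec a (Ordinal lm) mo em => e.
have -> : ps a mo = ps a.+1 (Ordinal lm) - ps a ord0 * cc (Ordinal lm).
  by rewrite e addrK.
apply: inQB; first by apply: (IH a.+1) => //; lia.
rewrite mulrC; apply: inQM; rewrite ps0; apply: inQq.
lia.
Qed.

Lemma row_delta_mul (v : 'cV[PP]_n) (i : 'I_n) : ((delta_mx 0 i : 'rV[PP]_n) *m v) 0 0 = v i 0.
Proof. by rewrite -rowE mxE. Qed.

Lemma scale_delta_mul a (v : 'cV[PP]_n) (i : 'I_n) :
  (a *: ((delta_mx 0 i : 'rV[PP]_n) *m v)) 0 0 = a * v i 0.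
Proof. by rewrite [LHS]mxE row_delta_mul. Qed.

Lemma mul_diff (x : 'rV[PP]_n) (u v : 'cV[PP]_n) :
  (x *m u) 0 0 - (x *m v) 0 0 = \sum_m x 0 m * (u m 0 - v m 0).
Proof. by rewrite !mxE -sumrB; apply: eq_bigr => m _; rewrite mulrBr. Qed.

Lemma core_Q mu i j : inQ (\det (Bm mu j F) - \det (Bm mu i F)).
Proof.
have [vj hj] := detB_lin mu j; have [vi hi] := detB_lin mu i.
have e1 : Bm mu j (fun _ => 1) = Bm mu i (fun _ => 1).
  by apply/matrixP=> r k; rewrite !mxE; case: (r == j); case: (r == i).
have emax : vj ord_max 0 = vi ord_max 0.
  move: (hj (fun _ => 1)) (hi (fun _ => 1)); rewrite e1 => -> .
  rewrite rowW1 -!scalemxAl !scale_delta_mul.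
  exact: (mulfI Del_neq0).
rewrite hj hi mul_diff (bigD1 ord_max) //= emax subrr mulr0 add0r.
apply: inQ_sum => m mmax; rewrite mulrC; apply: inQM.
have lm : (0 + m < n')%N.
  by move: mmax (ltn_ord m); rewrite -val_eqE /= ltnS leq_eqVlt => /negbTE ->.
exact: (@psQ m 0 lm m erefl).
Qed.

Definition Alt (p : PP) : PP := \sum_(s : 'S_n) sgnp n s *: msym s p.

Lemma msymX1 (s : 'S_n) (i : 'I_n) : msym s ('X_i : PP) = 'X_(s i).
Proof.
rewrite msymX; congr 'X_[_]; apply/mnmP => k; rewrite !mnmE.
by rewrite (can2_eq (permK s) (permKV s)) eq_sym.
Qed.

Lemma msymF (s : 'S_n) j : msym s (F j) = F (s j).
Proof.
rewrite /Ft raddf_sum; apply: eq_bigr => d _.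
by rewrite /= msymZ rmorphXn /= msymX1.
Qed.

Lemma sgnp_scale (s : 'S_n) (p : PP) : sgnp n s *: p = (-1) ^+ s * p.
Proof. by rewrite /sgnp -mul_mpolyC rmorph_sign. Qed.

Lemma msym_monoX (s : 'S_n) (mu : 'X_{1..n}) :
  msym s ('X_[mu] : PP) = \prod_r 'X_(s r) ^+ mu r.
Proof.
rewrite msymX (@mpolyXE _ rat s); apply: eq_bigr => r _; rewrite mnmE permK //.
Qed.

Lemma Alt_mono (mu : 'X_{1..n}) j : Alt ('X_[mu] * F j) = \det (Bm (fun r => mu r) j F).
Proof.
rewrite /Alt /determinant; apply: eq_bigr => s _.
rewrite sgnp_scale msymM msymF msym_monoX; congr (_ * _).
rewrite [RHS](eq_bigr (fun r => 'X_(s r) ^+ mu r * (if r == j then F (s r) else 1))); last first.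
  by move=> r _; rewrite mxE.
rewrite big_split /=; congr (_ * _).
by rewrite (bigD1 j) //= eqxx big1 ?mulr1 // => r /negbTE ->.
Qed.

Lemma Alt0 : Alt 0 = 0.
Proof. by rewrite /Alt big1 // => s _; rewrite msym0 scaler0. Qed.

Lemma AltD p1 p2 : Alt (p1 + p2) = Alt p1 + Alt p2.
Proof. by rewrite /Alt -big_split; apply: eq_bigr => s _; rewrite msymD scalerDr. Qed.

Lemma AltZ (c : rat) p : Alt (c *: p) = c *: Alt p.
Proof.
rewrite /Alt scaler_sumr; apply: eq_bigr => s _.
by rewrite msymZ !scalerA mulrC.
Qed.

Lemma AltN p : Alt (- p) = - Alt p.
Proof. by rewrite -scaleN1r AltZ scaleN1r. Qed.

Lemma AltB p1 p2 : Alt (p1 - p2) = Alt p1 - Alt p2.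
Proof. by rewrite AltD AltN. Qed.

Lemma Alt_sum (I : Type) (r : seq I) (Pr : pred I) (g : I -> PP) :
  Alt (\sum_(i <- r | Pr i) g i) = \sum_(i <- r | Pr i) Alt (g i).
Proof.
elim: r => [|x r IH]; first by rewrite !big_nil Alt0.
by rewrite !big_cons; case: (Pr x); rewrite ?AltD IH.
Qed.

Lemma inQZ (c : rat) p : inQ p -> inQ (c *: p).
Proof. by rewrite -mul_mpolyC; apply: inQM. Qed.

Lemma Alt_core (c : PP) i j : inQ (Alt (c * (F j - F i))).
Proof.
elim/mpolyind: c => [|c0 m p _ _ IH]; first by rewrite mul0r Alt0; apply: inQ0.
rewrite mulrDl AltD; apply: inQD => //.
rewrite -scalerAl AltZ; apply: inQZ.
rewrite mulrBr AltB !Alt_mono; exact: core_Q.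
Qed.

Lemma sgnpM (s t : 'S_n) : sgnp n (s * t)%g = sgnp n s * sgnp n t.
Proof. by rewrite /sgnp odd_permM signr_addb. Qed.

Lemma sgnp_sq (s : 'S_n) : sgnp n s * sgnp n s = 1.
Proof. by rewrite /sgnp -signr_addb addbb. Qed.

Lemma msym_Alt (t : 'S_n) p : msym t (Alt p) = sgnp n t *: Alt p.
Proof.
rewrite /Alt raddf_sum scaler_sumr [RHS](reindex_inj (mulIg t)) /=.
apply: eq_bigr => s _; rewrite msymZ -msymMm scalerA sgnpM.
by rewrite mulrCA sgnp_sq mulr1.
Qed.

Definition muq (i : nat) : 'X_{1..n} :=
  [multinom (if r == 0 :> nat then i else n.-1 - r) | r < n].

Lemma q_Alt i : q n f i = Alt ('X_[muq i] * F ord0).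
Proof.
rewrite Alt_mono /q; congr (\det _); apply/matrixP => r k; rewrite !mxE.
have -> : (r == ord0) = (r == 0 :> nat) by rewrite -val_eqE.
by rewrite /muq mnmE; case: ifP => _; rewrite ?mulr1 // mulrC.
Qed.

Lemma msym_q s i : msym s (q n f i) = sgnp n s *: q n f i.
Proof. by rewrite q_Alt msym_Alt. Qed.

Definition inIx (p : PP) := exists c : 'I_n -> 'I_n -> PP,
  p = \sum_(i < n) \sum_(j < n | j == i.+1 :> nat) c i j * (F j - F i).

Lemma inIxD p1 p2 : inIx p1 -> inIx p2 -> inIx (p1 + p2).
Proof.
move=> [c1 ->] [c2 ->]; exists (fun i j => c1 i j + c2 i j).
rewrite -big_split; apply: eq_bigr => i _; rewrite -big_split.
by apply: eq_bigr => j _; rewrite mulrDl.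
Qed.

Lemma inIxM x p : inIx p -> inIx (x * p).
Proof.
move=> [c ->]; exists (fun i j => x * c i j).
rewrite mulr_sumr; apply: eq_bigr => i _; rewrite mulr_sumr.
by apply: eq_bigr => j _; rewrite mulrA.
Qed.

Lemma inIx0 : inIx 0.
Proof. by rewrite -(mul0r 0); apply: inIxM; exists (fun _ _ => 0); rewrite big1 // => i _; rewrite big1 // => j _; rewrite mul0r. Qed.

Lemma inIx_sum (I : finType) (g : I -> PP) : (forall i, inIx (g i)) -> inIx (\sum_i g i).
Proof. by move=> H; apply: (big_ind inIx) => //; [exact: inIx0 | exact: inIxD]. Qed.

Lemma inIx_step (k k1 : 'I_n) : k1 = k.+1 :> nat -> inIx (F k1 - F k).
Proof.
move=> e; exists (fun i j => if (i == k) && (j == k1) then 1 else 0).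
rewrite (bigD1 k) //= [X in _ = _ + X]big1 ?addr0; last first.
  by move=> i /negbTE ik; rewrite big1 // => j _; rewrite ik mul0r.
rewrite (bigD1 k1) /=; last by rewrite e.
rewrite !eqxx mul1r [X in _ = _ + X]big1 ?addr0 // => j /andP [_ /negbTE ->].
by rewrite andbF mul0r.
Qed.

Lemma inIx_diff0 m (lt : (m < n)%N) : inIx (F (Ordinal lt) - F ord0).
Proof.
elim: m lt => [|m IH] lt.
  by rewrite (_ : Ordinal lt = ord0) ?subrr; [exact: inIx0 | apply: val_inj].
have lt' : (m < n)%N by apply: ltnW.
have -> : F (Ordinal lt) - F ord0 = (F (Ordinal lt) - F (Ordinal lt')) + (F (Ordinal lt') - F ord0).
  by rewrite addrA subrK.
by apply: inIxD; [apply: inIx_step | apply: IH].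
Qed.

Lemma q_inIx (i : nat) : (i < n')%N -> inIx (q n f i).
Proof.
move=> lt.
pose Z : 'M[PP]_n := \matrix_(r, k) (if r == 0 :> nat then 'X_k ^+ i else 'X_k ^+ (n.-1 - r)).
have lr : (n' - i < n)%N by rewrite ltnS leq_subr.
have Z0 : \det Z = 0.
  apply: (@determinant_alternate _ _ _ ord0 (Ordinal lr)).
    by rewrite -val_eqE /= eq_sym subn_eq0 -ltnNge.
  move=> k; rewrite !mxE /=.
  have -> : (n' - i == 0)%N = false by apply/negbTE; rewrite subn_eq0 -ltnNge.
  by rewrite subKn // ltnW.
have Ze : \det Z = \sum_k 'X_k ^+ i * cofactor VV ord0 k.
  rewrite (expand_det_row _ ord0); apply: eq_bigr => k _.
  have e1 : Z ord0 k = 'X_k ^+ i by rewrite mxE.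
  have e2 : cofactor Z ord0 k = cofactor VV ord0 k.
    by apply: cofactor_indep => r c r0; rewrite !mxE (neq0_nat _ r0).
  exact: (congr2 (fun x y => x * y) e1 e2).
have qe : q n f i = \sum_k (F k - F ord0) * ('X_k ^+ i * cofactor VV ord0 k).
  rewrite /q (expand_det_row _ ord0).
  rewrite (eq_bigr (fun k => F k * ('X_k ^+ i * cofactor VV ord0 k))); last first.
    move=> k _; rewrite qmat_cof mulrA; congr (_ * _); by rewrite mxE.
  under [RHS]eq_bigr do rewrite mulrBl.
  by rewrite sumrB -mulr_sumr -Ze Z0 mulr0 subr0.
rewrite qe; apply: inIx_sum => k; rewrite mulrC; apply: inIxM.
have := @inIx_diff0 k (ltn_ord k).
by rewrite (_ : Ordinal (ltn_ord k) = k) //; apply: val_inj.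
Qed.

Local Notation D := (Dprod n f).

Lemma inJ0 : inJ n 0.
Proof. by exists 0; rewrite mul0r. Qed.

Lemma inJD p1 p2 : inJ n p1 -> inJ n p2 -> inJ n (p1 + p2).
Proof. by move=> [g1 ->] [g2 ->]; exists (g1 + g2); rewrite mulrDl. Qed.

Lemma inJM x p : inJ n p -> inJ n (x * p).
Proof. by move=> [g ->]; exists (x * g); rewrite mulrA. Qed.

Lemma inJZ (c : rat) p : inJ n p -> inJ n (c *: p).
Proof. by rewrite -mul_mpolyC; apply: inJM. Qed.

Lemma inJN p : inJ n p -> inJ n (- p).
Proof. by move=> h; rewrite -mulN1r; apply: inJM. Qed.

Lemma inJ_sum (I : finType) (Pr : pred I) (g : I -> PP) :
  (forall i, Pr i -> inJ n (g i)) -> inJ n (\sum_(i | Pr i) g i).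
Proof. by move=> H; apply: (big_ind (inJ n)) => //; [exact: inJ0 | exact: inJD]. Qed.

Lemma msym_prodX (s : 'S_n) : msym s (\prod_(i < n) ('X_i : PP)) = \prod_(i < n) 'X_i.
Proof.
rewrite rmorph_prod /=; under eq_bigr do rewrite msymX1.
by rewrite [RHS](reindex_inj (@perm_inj _ s)).
Qed.

Lemma inJ_msym (s : 'S_n) p : inJ n p -> inJ n (msym s p).
Proof.
move=> [g ->]; exists (msym s g); rewrite msymM msymB msym1 msym_prodX //.
Qed.

Lemma msym_D (s : 'S_n) : msym s D = D.
Proof.
rewrite /Dprod rmorph_prod /=; under eq_bigr do rewrite msymF.
by rewrite [RHS](reindex_inj (@perm_inj _ s)).
Qed.

Definition Sy (x : PP) := \sum_(s : 'S_n) msym s x.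

Lemma msym_Sy (t : 'S_n) x : msym t (Sy x) = Sy x.
Proof.
rewrite /Sy raddf_sum [RHS](reindex_inj (mulIg t)) /=.
by apply: eq_bigr => s _; rewrite -msymMm.
Qed.

Lemma sgn_msym_mul (s : 'S_n) (r2 l k : nat) x y :
  sgnp n s *: msym s (D ^+ r2 * (x * D ^+ l - y * D ^+ k)) =
  D ^+ r2 * ((sgnp n s *: msym s x) * D ^+ l - (sgnp n s *: msym s y) * D ^+ k).
Proof.
rewrite !sgnp_scale msymM msymB !msymM !rmorphXn /= msym_D.
set t := (-1) ^+ s; ring.
Qed.

Lemma part2 a k : R_sgn_inv n f a k -> R_inI n f a k ->
  exists (c : 'I_n' -> PP) l, (forall i, R_sym n f (c i) l) /\
     R_eq n f a k (\sum_(i < n') c i * q n f i) l.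
Proof.
move=> H1 [c [l [r2 H2]]].
set G := \sum_(i < n) _ in H2.
have [rs Hrs] := fin_all_exists H1.
pose R := \max_(s : 'S_n) rs s.
pose Nc : PP := (n`!)%:R.
have HA : inJ n (D ^+ R * ((Alt a - Nc * a) * D ^+ k)).
  have -> : (Alt a - Nc * a) * D ^+ k =
      \sum_(s : 'S_n) (sgnp n s *: msym s a * D ^+ k - a * D ^+ k).
    by rewrite sumrB -!mulr_suml sumr_const card_Sn mulrBl /Nc mulr_natl.
  rewrite mulr_sumr; apply: inJ_sum => s _.
  rewrite (_ : R = (R - rs s) + rs s)%N; last by rewrite subnK // (leq_bigmax (F := rs) s).
  rewrite exprD -mulrA; apply: inJM; exact: Hrs.
have HB : inJ n (D ^+ r2 * (Alt a * D ^+ l - Alt G * D ^+ k)).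
  have -> : D ^+ r2 * (Alt a * D ^+ l - Alt G * D ^+ k) =
      \sum_(s : 'S_n) sgnp n s *: msym s (D ^+ r2 * (a * D ^+ l - G * D ^+ k)).
    under [RHS]eq_bigr do rewrite sgn_msym_mul.
    by rewrite /Alt -mulr_sumr sumrB -!mulr_suml.
  by apply: inJ_sum => s _; apply: inJZ; apply: inJ_msym.
have [h Hh] : inQ (Alt G).
  rewrite /G Alt_sum; apply: inQ_sum => i _; rewrite Alt_sum; apply: inQ_sum => j _.
  exact: Alt_core.
pose N : rat := (n`!)%:R.
have N0 : N != 0 by rewrite /N pnatr_eq0 -lt0n fact_gt0.
exists (fun m => (N^-1 * N^-1) *: Sy (h m)), l; split.
  move=> m s; exists 0; rewrite msymZ msym_Sy subrr mulr0; exact: inJ0.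
have SQ : \sum_(m < n') (N^-1 * N^-1) *: Sy (h m) * q n f m = N^-1 *: Alt G.
  have e : \sum_(m < n') Sy (h m) * q n f m = N *: Alt G.
    rewrite /Sy; under eq_bigr do rewrite mulr_suml.
    rewrite exchange_big /=.
    rewrite (eq_bigr (fun s : 'S_n => sgnp n s *: msym s (Alt G))); last first.
      move=> s _; rewrite Hh rmorph_sum scaler_sumr; apply: eq_bigr => m _.
      by rewrite /= msymM msym_q -scalerAr scalerA sgnp_sq scale1r.
    under eq_bigr do rewrite msym_Alt scalerA sgnp_sq scale1r.
    by rewrite sumr_const card_Sn scaler_nat.
  under eq_bigr do rewrite -scalerAl.
  by rewrite -scaler_sumr e scalerA -mulrA mulVf // mulr1.
exists (R + k + r2); rewrite SQ.
rewrite -mul_mpolyC.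
set X := D ^+ (R + k + r2) * (a * D ^+ l - (N^-1)%:MP * Alt G * D ^+ k).
have key : Nc * X = D ^+ (r2 + l) * (- (D ^+ R * ((Alt a - Nc * a) * D ^+ k))) +
    D ^+ (R + k) * (D ^+ r2 * (Alt a * D ^+ l - Alt G * D ^+ k)).
  apply: key_alg; rewrite /Nc -(rmorph_nat (mpolyC n (R:=rat))) -rmorphM /= mulfV //.
have : inJ n (Nc * X) by rewrite key; apply: inJD; apply: inJM => //; apply: inJN.
rewrite /Nc mulr_natl -scaler_nat => /(inJZ N^-1); rewrite scalerA mulVf // scale1r //.
Qed.
End Core.

Theorem lemma3p10 (n : nat) (f : {poly int}) :
  (2 <= n)%N -> (1 < size f)%N ->
  (* each q_i lies in (I^sgn)^W *)
  (forall i : 'I_n.-1, R_sgn_inv n f (q n f i) 0 /\ R_inI n f (q n f i) 0) /\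
  (* and they generate (I^sgn)^W as an R^W-module *)
  (forall (a : P n) (k : nat), R_sgn_inv n f a k -> R_inI n f a k ->
     exists (c : 'I_n.-1 -> P n) (l : nat),
       (forall i, R_sym n f (c i) l) /\
       R_eq n f a k (\sum_(i < n.-1) c i * q n f i) l).
Proof.
case: n => [//|n'] _ _; split.
  move=> i; split.
    move=> s; exists 0%N.
    rewrite msym_q scalerA sgnp_sq scale1r subrr mulr0; exact: inJ0.
  have [c hc] := @q_inIx n' f i (ltn_ord i).
  exists c, 0%N; exists 0%N; rewrite -hc subrr mulr0; exact: inJ0.
move=> a k h1 h2; exact: part2.
Qed.
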